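(* Let $(M,g)$ be a $6$-dimensional Einstein manifold. Then for all $i,j$, $$(-\tau|R|^2+4\mathring{R}-2\hat{R})g_{ij}+12\check{R}_{ij}+12\hat{R}_{ij}-24\mathring{R}_{ij}+4\tau R_{iabc}R_{jabc}=0.$$
   Context: Conventions: $R(X,Y)Z=[\nabla_X,\nabla_Y]Z-\nabla_{[X,Y]}Z$ for the Levi-Civita connection $\nabla$; components w.r.t. a local orthonormal frame, $R_{abcd}=g(R(e_a,e_b)e_c,e_d)$, $\rho_{ij}=R_{aija}$, $\tau=\rho_{aa}$, summation over repeated indices. Einstein means $\rho_{ij}=\frac{\tau}{\dim M}g_{ij}$. Notation: $|R|^2=R_{abcd}R_{abcd}$, $\hat R=R_{abcd}R_{abuv}R_{cduv}$, $\mathring R=R_{abcd}R_{aucv}R_{budv}$, $\check R_{ij}=R_{iuvj}R_{abcu}R_{abcv}$, $\hat R_{ij}=R_{ibac}R_{jbuv}R_{acuv}$, $\mathring R_{ij}=R_{iabc}R_{jubv}R_{aucv}$. *)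

(* Defs.v *)
(* Pointwise (algebraic) model of the Riemann curvature tensor
   of an n-dimensional Riemannian manifold, in components w.r.t. a local
   orthonormal frame e_1..e_n at a point: R_{abcd} = g(R(e_a,e_b)e_c,e_d). *)
From HB Require Import structures.
From mathcomp Require Import all_boot all_order all_algebra.
Set Implicit Arguments. Unset Strict Implicit. Unset Printing Implicit Defensive.
Import Order.TTheory GRing.Theory Num.Theory.
Local Open Scope ring_scope.

Definition tensor4 (R : realFieldType) (n : nat) := 'I_n -> 'I_n -> 'I_n -> 'I_n -> R.

Definition gmet (R : realFieldType) (n : nat) (i j : 'I_n) : R := (i == j)%:R.
Arguments gmet {R n} i j.

Definition curvature_tensor (R : realFieldType) (n : nat) (Rm : tensor4 R n) : Prop :=
  [/\ (forall a b c d, Rm a b c d = - Rm b a c d),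
      (forall a b c d, Rm a b c d = - Rm a b d c),
      (forall a b c d, Rm a b c d = Rm c d a b)
    & (forall a b c d, Rm a b c d + Rm b c a d + Rm c a b d = 0)].

Definition ricci (R : realFieldType) (n : nat) (Rm : tensor4 R n) (i j : 'I_n) : R :=
  \sum_(a < n) Rm a i j a.

Definition scal (R : realFieldType) (n : nat) (Rm : tensor4 R n) : R :=
  \sum_(a < n) ricci Rm a a.

Definition einstein (R : realFieldType) (n : nat) (Rm : tensor4 R n) : Prop :=
  forall i j, ricci Rm i j = scal Rm / n%:R * gmet i j.

Definition normsq (R : realFieldType) (n : nat) (Rm : tensor4 R n) : R :=
  \sum_(a < n) \sum_(b < n) \sum_(c < n) \sum_(d < n) Rm a b c d * Rm a b c d.

Definition Rhat (R : realFieldType) (n : nat) (Rm : tensor4 R n) : R :=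
  \sum_(a < n) \sum_(b < n) \sum_(c < n) \sum_(d < n) \sum_(u < n) \sum_(v < n)
    Rm a b c d * Rm a b u v * Rm c d u v.

Definition Rring (R : realFieldType) (n : nat) (Rm : tensor4 R n) : R :=
  \sum_(a < n) \sum_(b < n) \sum_(c < n) \sum_(d < n) \sum_(u < n) \sum_(v < n)
    Rm a b c d * Rm a u c v * Rm b u d v.

Definition Rcheck_ij (R : realFieldType) (n : nat) (Rm : tensor4 R n) (i j : 'I_n) : R :=
  \sum_(u < n) \sum_(v < n) \sum_(a < n) \sum_(b < n) \sum_(c < n)
    Rm i u v j * Rm a b c u * Rm a b c v.

Definition Rhat_ij (R : realFieldType) (n : nat) (Rm : tensor4 R n) (i j : 'I_n) : R :=
  \sum_(a < n) \sum_(b < n) \sum_(c < n) \sum_(u < n) \sum_(v < n)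
    Rm i b a c * Rm j b u v * Rm a c u v.

Definition Rring_ij (R : realFieldType) (n : nat) (Rm : tensor4 R n) (i j : 'I_n) : R :=
  \sum_(a < n) \sum_(b < n) \sum_(c < n) \sum_(u < n) \sum_(v < n)
    Rm i a b c * Rm j u b v * Rm a u c v.

Definition RR_ij (R : realFieldType) (n : nat) (Rm : tensor4 R n) (i j : 'I_n) : R :=
  \sum_(a < n) \sum_(b < n) \sum_(c < n) Rm i a b c * Rm j a b c.

(* Main.v *)
Require Import Defs.
From Stdlib Require Import ZArith Ring_polynom Ring_theory BinList.
From HB Require Import structures.
From mathcomp Require Import all_boot all_order all_algebra.
From mathcomp.algebra_tactics Require Import common.
From mathcomp Require Import ring lra.
From mathcomp.zify Require Import ssrZ zify.
Import Order.TTheory GRing.Theory Num.Theory.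
Local Open Scope ring_scope.
Set Implicit Arguments. Unset Strict Implicit. Unset Printing Implicit Defensive.

Definition PolZ := Pol Z.
Definition P0 : PolZ := Pc Z0.
Definition padd : PolZ -> PolZ -> PolZ := Padd Z0 Z.add Zeq_bool.
Definition pmul : PolZ -> PolZ -> PolZ := Pmul Z0 (Zpos xH) Z.add Z.mul Zeq_bool.
Definition peq : PolZ -> PolZ -> bool := Peq Zeq_bool.
Definition pX (p : positive) : PolZ := mk_X Z0 (Zpos xH) p.

Local Open Scope ring_scope.

Section Ev.
Variable R : comPzRingType.
Definition zR (z : Z) : R := (int_of_Z z)%:~R.
Definition ev (l : seq R) (p : PolZ) : R := Pphi 0 +%R *%R zR l p.

Lemma ev_add l p q : ev l (padd p q) = ev l p + ev l q.
Proof. exact: (Padd_ok (Eqsth R) (Eq_ext _ _ _) (Rth_ARth (Eqsth R) (Eq_ext _ _ _) (RR R)) (RZ R)). Qed.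
Lemma ev_mul l p q : ev l (pmul p q) = ev l p * ev l q.
Proof. exact: (Pmul_ok (Eqsth R) (Eq_ext _ _ _) (Rth_ARth (Eqsth R) (Eq_ext _ _ _) (RR R)) (RZ R)). Qed.
Lemma ev_X l p : ev l (pX p) = BinList.nth 0 p l.
Proof. symmetry; exact: (mkX_ok (Eqsth R) (Eq_ext _ _ _) (Rth_ARth (Eqsth R) (Eq_ext _ _ _) (RR R)) (RZ R)). Qed.
Lemma ev_C l z : ev l (Pc z) = zR z.
Proof. by []. Qed.
Lemma ev_eq0 l p : peq p P0 -> ev l p = 0.
Proof.
move=> h; have := (Peq_ok (Eqsth R) (Eq_ext _ _ _) (RZ R) _ _ h l).
by rewrite /ev /= => ->.
Qed.
End Ev.

Definition lf := seq (Z * positive).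
Definition lf_pol (f : lf) : PolZ := foldr (fun t acc => padd (pmul (Pc t.1) (pX t.2)) acc) P0 f.
Definition lscale (s : Z) (f : lf) : lf := [seq (Z.mul s t.1, t.2) | t <- f].
Arguments lscale : simpl never.

Section LinEv.
Variable R : comPzRingType.
Implicit Types (l : seq R) (f g : lf).
Definition leval l f : R := \sum_(t <- f) zR R t.1 * BinList.nth 0 t.2 l.

Lemma zR0 : zR R Z0 = 0. Proof. by rewrite /zR /=. Qed.
Lemma zRM a b : zR R (Z.mul a b) = zR R a * zR R b.
Proof. by rewrite /zR -intrM; congr (_ %:~R); lia. Qed.
Lemma zRN a : zR R (Z.opp a) = - zR R a.
Proof. by rewrite /zR (_ : int_of_Z (Z.opp a) = - int_of_Z a) ?rmorphN //; lia. Qed.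

Lemma lf_polE l f : ev l (lf_pol f) = leval l f.
Proof.
elim: f => [|t f IH]; first by rewrite /leval big_nil /= /ev /= zR0.
by rewrite /= ev_add ev_mul ev_X ev_C IH /leval big_cons.
Qed.
Lemma leval_cat l f g : leval l (f ++ g) = leval l f + leval l g.
Proof. by rewrite /leval big_cat. Qed.
Lemma leval_scale l s f : leval l (lscale s f) = zR R s * leval l f.
Proof. by rewrite /leval big_map mulr_sumr; apply: eq_bigr => t _; rewrite zRM mulrA. Qed.
Lemma leval_flatten (T : Type) l (F : T -> lf) (s : seq T) :
  leval l (flatten [seq F x | x <- s]) = \sum_(x <- s) leval l (F x).
Proof.
elim: s => [|x s IH]; first by rewrite /leval !big_nil.
by rewrite /= leval_cat IH big_cons.
Qed.
End LinEv.

Lemma bnth_succ (A : Type) (d : A) p l : BinList.nth d (Pos.succ p) l = BinList.nth d p (behead l).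
Proof.
elim: p l => [p IH|p IH|] l //=.
by rewrite IH jump_succ /= -!jump_tl.
Qed.
Lemma bnth_nat (A : Type) (d : A) n l : BinList.nth d (Pos.of_succ_nat n) l = nth d l n.
Proof.
elim: n l => [|n IH] l; first by case: l.
rewrite /= bnth_succ IH; by case: l => [|x l] //=; rewrite nth_nil.
Qed.

Definition code (a b c d : nat) : nat := (((a * 6 + b) * 6 + c) * 6 + d)%N.
Definition var a b c d : positive := Pos.of_succ_nat (code a b c d).
Definition lexle (a b c d : nat) : bool := ((a < c) || ((a == c) && (b <= d)))%N.
Definition canon (a b c d : nat) : Z * (nat * nat * nat * nat) :=
 if (a == b) || (c == d) then (Z0, (0, 0, 0, 0))%N else
 let '(s1, a1, b1) := if (a < b)%N then ((Zpos xH), a, b) else ((Zneg xH), b, a) in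
 let '(s2, c1, d1) := if (c < d)%N then ((Zpos xH), c, d) else ((Zneg xH), d, c) in
 if lexle a1 b1 c1 d1 then (Z.mul s1 s2, (a1, b1, c1, d1))
 else (Z.mul s1 s2, (c1, d1, a1, b1)).
Definition base (q : nat * nat * nat * nat) : lf :=
  let '(a, b, c, d) := q in
  if ((a < c) && (c < d) && (d < b))%N then [:: ((Zpos xH), var a d c b); ((Zneg xH), var a c d b)]
  else [:: ((Zpos xH), var a b c d)].
Definition sym0 a b c d : lf := let '(s, q) := canon a b c d in lscale s (base q).

Section Tensor.
Variables (R : realFieldType) (Rm : tensor4 R 6).
Hypothesis hc : curvature_tensor Rm.
Definition Rn (a b c d : nat) : R := Rm (inord a) (inord b) (inord c) (inord d).
Lemma Rn_a1 a b c d : Rn a b c d = - Rn b a c d. Proof. by case: hc => h _ _ _; apply: h. Qed.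
Lemma Rn_a2 a b c d : Rn a b c d = - Rn a b d c. Proof. by case: hc => _ h _ _; apply: h. Qed.
Lemma Rn_p a b c d : Rn a b c d = Rn c d a b. Proof. by case: hc => _ _ h _; apply: h. Qed.
Lemma Rn_b a b c d : Rn a b c d + Rn b c a d + Rn c a b d = 0.
Proof. by case: hc => _ _ _ h; apply: h. Qed.

Lemma zR1 : zR R (Zpos xH) = 1. Proof. by rewrite /zR /=. Qed.
Lemma zRm1 : zR R (Zneg xH) = -1. Proof. by rewrite /zR /=. Qed.

Definition Rq (q : nat * nat * nat * nat) := let '(a, b, c, d) := q in Rn a b c d.

Definition env : seq R :=
  map (fun n => Rn (n %/ 216) (n %/ 36 %% 6) (n %/ 6 %% 6) (n %% 6))%N (iota 0 1296).

Lemma env_var a b c d : (a < 6)%N -> (b < 6)%N -> (c < 6)%N -> (d < 6)%N ->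
  BinList.nth 0 (var a b c d) env = Rn a b c d.
Proof.
move=> ha hb hc' hd; rewrite /var bnth_nat (nth_map 0%N); last by rewrite size_iota /code; lia.
rewrite nth_iota; last by rewrite /code; lia.
rewrite /code add0n; congr Rn; lia.
Qed.

Lemma base_ok a b c d : (a < b)%N -> (c < d)%N -> lexle a b c d ->
  (a < 6)%N -> (b < 6)%N -> (c < 6)%N -> (d < 6)%N ->
  leval env (base (a, b, c, d)) = Rn a b c d.
Proof.
move=> hab hcd hl ha hb hc' hd; rewrite /base.
case: ifP => [/andP[/andP[h1 h2] h3]|_].
  rewrite /leval !big_cons big_nil /= !env_var // zR1 zRm1 addr0 !mul1r mulN1r.
  have e1 := Rn_b a c d b; have e2 := Rn_p c d a b; have e3 := Rn_a1 d a c b.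
  lra.
by rewrite /leval big_cons big_nil /= env_var // zR1 mul1r addr0.
Qed.

Lemma A0 a b c d : (a < 6)%N -> (b < 6)%N -> (c < 6)%N -> (d < 6)%N ->
  Rn a b c d = leval env (sym0 a b c d).
Proof.
move=> ha hb hc' hd; rewrite /sym0 /canon.
have [->|nab] := eqVneq a b.
  rewrite /= leval_scale zR0 mul0r.
  have := Rn_a1 b b c d; lra.
have [->|ncd] := eqVneq c d.
  rewrite orbT /= leval_scale zR0 mul0r.
  have := Rn_a2 a b d d; lra.
rewrite /=.
have e1 := Rn_a1 a b c d; have e2 := Rn_a2 a b c d; have e3 := Rn_a2 b a c d.
have e4 := Rn_p a b c d; have e5 := Rn_p b a c d; have e6 := Rn_p a b d c; have e7 := Rn_p b a d c.
have e8 := Rn_a1 a b d c.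
case: ifP => h1; case: ifP => h2; case: ifP => h3;
  rewrite leval_scale zRM ?zR1 ?zRm1 base_ok //; try lra;
  move: h1 h2 h3 nab ncd; rewrite /lexle; lia.
Qed.
End Tensor.

Definition rel_off (i j : nat) : lf := flatten [seq sym0 a i j a | a <- iota 0 6].
Definition rel_diag (i : nat) : lf :=
  flatten [seq sym0 a i i a | a <- iota 0 6] ++ lscale (Zneg xH) (flatten [seq sym0 a 0 0 a | a <- iota 0 6]).
Arguments rel_off : simpl never.
Arguments rel_diag : simpl never.
Definition offpairs : seq (nat * nat) :=
  [seq p <- [seq (i, j) | i <- iota 0 6, j <- iota 0 6] | (p.1 < p.2)%N].
Definition rels : seq lf := [seq rel_off p.1 p.2 | p <- offpairs] ++ [seq rel_diag i | i <- iota 1 5].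
Definition cert_lf (c : seq (Z * nat)) : lf := flatten [seq lscale m.1 (nth [::] rels m.2) | m <- c].
Definition elim_data : seq (positive * lf * Z * seq (Z * nat)) := [::
  (81%positive, [:: ((Zneg 1%positive), 118%positive); ((Zneg 1%positive), 155%positive); ((Zneg 1%positive), 192%positive)], (Zpos 1%positive), [:: ((Zneg 1%positive), 0%N)]);
  (45%positive, [:: ((Zpos 1%positive), 124%positive); ((Zpos 1%positive), 161%positive); ((Zpos 1%positive), 198%positive)], (Zpos 1%positive), [:: ((Zpos 1%positive), 1%N)]);
  (46%positive, [:: ((Zneg 1%positive), 88%positive); ((Zpos 1%positive), 167%positive); ((Zpos 1%positive), 204%positive)], (Zpos 1%positive), [:: ((Zpos 1%positive), 2%N)]);
  (47%positive, [:: ((Zneg 1%positive), 89%positive); ((Zneg 1%positive), 131%positive); ((Zpos 1%positive), 210%positive)], (Zpos 1%positive), [:: ((Zpos 1%positive), 3%N)]);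
  (48%positive, [:: ((Zneg 1%positive), 90%positive); ((Zneg 1%positive), 132%positive); ((Zneg 1%positive), 174%positive)], (Zpos 1%positive), [:: ((Zpos 1%positive), 4%N)]);
  (39%positive, [:: ((Zneg 1%positive), 340%positive); ((Zneg 1%positive), 377%positive); ((Zneg 1%positive), 414%positive)], (Zpos 1%positive), [:: ((Zneg 1%positive), 5%N)]);
  (40%positive, [:: ((Zpos 1%positive), 304%positive); ((Zneg 1%positive), 383%positive); ((Zneg 1%positive), 420%positive)], (Zpos 1%positive), [:: ((Zneg 1%positive), 6%N)]);
  (41%positive, [:: ((Zpos 1%positive), 305%positive); ((Zpos 1%positive), 347%positive); ((Zneg 1%positive), 426%positive)], (Zpos 1%positive), [:: ((Zneg 1%positive), 7%N)]);
  (42%positive, [:: ((Zpos 1%positive), 306%positive); ((Zpos 1%positive), 348%positive); ((Zpos 1%positive), 390%positive)], (Zpos 1%positive), [:: ((Zneg 1%positive), 8%N)]);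
  (76%positive, [:: ((Zneg 1%positive), 298%positive); ((Zneg 1%positive), 599%positive); ((Zneg 1%positive), 636%positive)], (Zpos 1%positive), [:: ((Zneg 1%positive), 9%N)]);
  (77%positive, [:: ((Zneg 1%positive), 299%positive); ((Zpos 1%positive), 563%positive); ((Zneg 1%positive), 642%positive)], (Zpos 1%positive), [:: ((Zneg 1%positive), 10%N)]);
  (78%positive, [:: ((Zneg 1%positive), 300%positive); ((Zpos 1%positive), 564%positive); ((Zpos 1%positive), 606%positive)], (Zpos 1%positive), [:: ((Zneg 1%positive), 11%N)]);
  (113%positive, [:: ((Zneg 1%positive), 335%positive); ((Zneg 1%positive), 557%positive); ((Zneg 1%positive), 858%positive)], (Zpos 1%positive), [:: ((Zneg 1%positive), 12%N)]);
  (114%positive, [:: ((Zneg 1%positive), 336%positive); ((Zneg 1%positive), 558%positive); ((Zpos 1%positive), 822%positive)], (Zpos 1%positive), [:: ((Zneg 1%positive), 13%N)]);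
  (150%positive, [:: ((Zneg 1%positive), 372%positive); ((Zneg 1%positive), 594%positive); ((Zneg 1%positive), 816%positive)], (Zpos 1%positive), [:: ((Zneg 1%positive), 14%N)]);
  (38%positive, [:: ((Zneg 1%positive), 149%positive); ((Zneg 1%positive), 371%positive); ((Zpos 1%positive), 556%positive); ((Zpos 1%positive), 630%positive); ((Zpos 1%positive), 852%positive)], (Zpos 2%positive), [:: ((Zneg 1%positive), 15%N); ((Zpos 1%positive), 16%N); ((Zpos 1%positive), 17%N); ((Zneg 1%positive), 18%N); ((Zpos 1%positive), 19%N)]);
  (75%positive, [:: ((Zneg 1%positive), 112%positive); ((Zpos 1%positive), 371%positive); ((Zpos 1%positive), 408%positive); ((Zneg 1%positive), 556%positive); ((Zpos 1%positive), 1074%positive)], (Zpos 2%positive), [:: ((Zpos 1%positive), 15%N); ((Zneg 1%positive), 16%N); ((Zneg 1%positive), 17%N); ((Zpos 1%positive), 18%N); ((Zpos 1%positive), 19%N)]);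
  (334%positive, [:: ((Zpos 1%positive), 149%positive); ((Zpos 1%positive), 186%positive); ((Zneg 1%positive), 297%positive); ((Zneg 1%positive), 556%positive); ((Zpos 1%positive), 1074%positive)], (Zpos 2%positive), [:: ((Zneg 1%positive), 15%N); ((Zneg 1%positive), 16%N); ((Zneg 1%positive), 17%N); ((Zpos 1%positive), 18%N); ((Zpos 1%positive), 19%N)]);
  (593%positive, [:: ((Zpos 1%positive), 112%positive); ((Zpos 1%positive), 186%positive); ((Zneg 1%positive), 297%positive); ((Zneg 1%positive), 371%positive); ((Zpos 1%positive), 852%positive)], (Zpos 2%positive), [:: ((Zneg 1%positive), 15%N); ((Zneg 1%positive), 16%N); ((Zpos 1%positive), 17%N); ((Zneg 1%positive), 18%N); ((Zpos 1%positive), 19%N)]);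
  (815%positive, [:: ((Zneg 1%positive), 112%positive); ((Zneg 1%positive), 149%positive); ((Zpos 1%positive), 297%positive); ((Zpos 1%positive), 408%positive); ((Zpos 1%positive), 630%positive)], (Zpos 2%positive), [:: ((Zpos 1%positive), 15%N); ((Zpos 1%positive), 16%N); ((Zneg 1%positive), 17%N); ((Zneg 1%positive), 18%N); ((Zpos 1%positive), 19%N)])].
Definition chk1 (t : positive * lf * Z * seq (Z * nat)) : bool :=
  let '(k, L, d, c) := t in
  peq (lf_pol (lscale d ((Zpos xH, k) :: lscale (Zneg xH) L) ++ lscale (Zneg xH) (cert_lf c))) P0
  && negb (Z.eqb d Z0).
Fixpoint lookup (p : positive) (s : seq (positive * lf * Z * seq (Z * nat))) : option lf :=
  match s with
  | [::] => None
  | (k, L, _, _) :: s' => if Pos.eqb k p then Some L else lookup p s'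
  end.
Definition lsubst (f : lf) : lf :=
  flatten [seq match lookup t.2 elim_data with Some L => lscale t.1 L | None => [:: t] end | t <- f].
Definition sym1 a b c d : lf := lsubst (sym0 a b c d).

Lemma elim_check : all chk1 elim_data = true.
Proof. vm_compute. reflexivity. Qed.

Lemma sum6 (R : nmodType) (G : 'I_6 -> R) : \sum_(a < 6) G a = \sum_(a <- iota 0 6) G (inord a).
Proof.
transitivity (\sum_(a < 6) G (inord a)); first by apply: eq_bigr => a _; rewrite inord_val.
by rewrite -(big_mkord xpredT (fun a => G (inord a))).
Qed.

Section Einstein.
Variables (R : realFieldType) (Rm : tensor4 R 6).
Hypothesis hc : curvature_tensor Rm.
Hypothesis he : einstein Rm.

Lemma ricciE i j : ricci Rm (inord i) (inord j) = \sum_(a <- iota 0 6) Rn Rm a i j a.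
Proof. by rewrite /ricci sum6. Qed.

Lemma sum_sym0 (F : nat -> nat * nat * nat * nat) :
  (forall a, (a < 6)%N -> let '(x, y, z, w) := F a in [&& x < 6, y < 6, z < 6 & w < 6]%N) ->
  \sum_(a <- iota 0 6) leval (env Rm) (let '(x, y, z, w) := F a in sym0 x y z w)
  = \sum_(a <- iota 0 6) (let '(x, y, z, w) := F a in Rn Rm x y z w).
Proof.
move=> hF; rewrite big_seq [RHS]big_seq; apply: eq_bigr => a; rewrite mem_iota => /andP[_ ha].
have := hF a ha; case: (F a) => [[[x y] z] w] /and4P[hx hy hz hw].
by rewrite -(A0 hc).
Qed.

Lemma rel_off_ok i j : (i < 6)%N -> (j < 6)%N -> i != j -> leval (env Rm) (rel_off i j) = 0.
Proof.
move=> hi hj hij; rewrite /rel_off leval_flatten.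
rewrite (@sum_sym0 (fun a => (a, i, j, a))); last by move=> a ha; rewrite ha hi hj.
rewrite -ricciE he /gmet.
have -> : (@inord 5 i == inord j) = false.
  apply/negbTE; apply: contra hij => /eqP /(congr1 val); rewrite /= !inordK //.
  by move=> ->.
by rewrite mulr0.
Qed.

Lemma rel_diag_ok i : (i < 6)%N -> leval (env Rm) (rel_diag i) = 0.
Proof.
move=> hi; rewrite /rel_diag leval_cat leval_scale !leval_flatten.
rewrite (@sum_sym0 (fun a => (a, i, i, a))); last by move=> a ha; rewrite ha hi.
rewrite (@sum_sym0 (fun a => (a, 0, 0, a))%N); last by move=> a ha; rewrite ha.
rewrite -!ricciE !he /gmet !eqxx zRm1; lra.
Qed.

Lemma rels_ok k : leval (env Rm) (nth [::] rels k) = 0.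
Proof.
have [hk|hk] := ltnP k 20; last by rewrite nth_default; [rewrite /leval big_nil | rewrite (_ : size rels = 20%N)].
do 20? (case: k hk => [|k] hk; [rewrite /=; first [apply: rel_off_ok | apply: rel_diag_ok] => // | ]).
done.
Qed.

Lemma zR_neq0 d : Z.eqb d Z0 = false -> zR R d != 0.
Proof.
move=> /Z.eqb_neq hd; rewrite /zR intr_eq0; apply/eqP; lia.
Qed.

Lemma chk1_ok k L d c : chk1 (k, L, d, c) -> BinList.nth 0 k (env Rm) = leval (env Rm) L.
Proof.
rewrite /chk1 => /andP[hp hd].
have := ev_eq0 (env Rm) hp; rewrite lf_polE leval_cat !leval_scale /cert_lf leval_flatten.
rewrite big1; last by move=> m _; rewrite leval_scale rels_ok mulr0.
rewrite mulr0 addr0 /leval big_cons /= -/(leval _ _).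
rewrite -[leval _ (lscale _ _)]/(leval (env Rm) (lscale (Zneg xH) L)) leval_scale zR1 zRm1 mul1r.
move/eqP; rewrite mulf_eq0 (negbTE (zR_neq0 (negbTE hd))) /= mulN1r subr_eq0 => /eqP.
done.
Qed.

Lemma lookup_ok p L : lookup p elim_data = Some L -> BinList.nth 0 p (env Rm) = leval (env Rm) L.
Proof.
have := elim_check; elim: elim_data => [|[[[k L'] d] c] s IH] //=.
move=> /andP[h1 hs]; case: ifP => [/Pos.eqb_eq hk [<-]|_]; last exact: IH.
rewrite -hk; exact: chk1_ok h1.
Qed.

Lemma leval_subst f : leval (env Rm) (lsubst f) = leval (env Rm) f.
Proof.
rewrite /lsubst leval_flatten [RHS]/leval; apply: eq_bigr => [[z p]] _.
case E: (lookup (z, p).2 elim_data) => [L|].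
  by rewrite leval_scale (lookup_ok E).
by rewrite /leval big_cons big_nil addr0.
Qed.

Lemma A1 a b c d : (a < 6)%N -> (b < 6)%N -> (c < 6)%N -> (d < 6)%N ->
  Rn Rm a b c d = leval (env Rm) (sym1 a b c d).
Proof. by move=> *; rewrite /sym1 leval_subst -A0. Qed.
End Einstein.

Definition mktab : seq (seq (seq (seq PolZ))) :=
  [seq [seq [seq [seq lf_pol (sym1 a b c d) | d <- iota 0 6] | c <- iota 0 6] | b <- iota 0 6] | a <- iota 0 6].
Definition lk (t : seq (seq (seq (seq PolZ)))) (a b c d : nat) : PolZ :=
  nth P0 (nth [::] (nth [::] (nth [::] t a) b) c) d.

Lemma lkE a b c d : (a < 6)%N -> (b < 6)%N -> (c < 6)%N -> (d < 6)%N ->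
  lk mktab a b c d = lf_pol (sym1 a b c d).
Proof.
move=> ha hb hc hd; rewrite /lk /mktab.
rewrite (nth_map 0%N) ?size_iota // nth_iota // add0n.
rewrite (nth_map 0%N) ?size_iota // nth_iota // add0n.
rewrite (nth_map 0%N) ?size_iota // nth_iota // add0n.
by rewrite (nth_map 0%N) ?size_iota // nth_iota // add0n.
Qed.

Definition Psum (f : nat -> PolZ) : PolZ := foldr (fun a acc => padd (f a) acc) P0 (iota 0 6).

Lemma ev_Psum (R : comPzRingType) (l : seq R) f : ev l (Psum f) = \sum_(a < 6) ev l (f a).
Proof.
rewrite -(big_mkord xpredT (fun a => ev l (f a))) /Psum /index_iota subn0.
elim: (iota 0 6) => [|x s IH]; first by rewrite big_nil /ev /= zR0.
by rewrite /= ev_add IH big_cons.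
Qed.

Lemma TE (R : realFieldType) (Rm : tensor4 R 6) : curvature_tensor Rm -> einstein Rm ->
  forall a b c d : 'I_6, ev (env Rm) (lk mktab a b c d) = Rm a b c d.
Proof.
move=> hc he a b c d; rewrite lkE // lf_polE -A1 //.
by rewrite /Rn !inord_val.
Qed.

Definition GPgen (sc ns rr rh ch hi ri rrp : PolZ) (g : Z) : PolZ :=
  padd (pmul (padd (padd (pmul (Pc (Zneg xH)) (pmul sc ns)) (pmul (Pc (Zpos 4)) rr))
                   (pmul (Pc (Zneg 2)) rh))
             (Pc g))
  (padd (pmul (Pc (Zpos 12)) ch)
  (padd (pmul (Pc (Zpos 12)) hi)
  (padd (pmul (Pc (Zneg 24)) ri)
        (pmul (Pc (Zpos 4)) (pmul sc rrp))))).

Section Sym.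
Variable T : nat -> nat -> nat -> nat -> PolZ.
Definition scalP := Psum (fun a => Psum (fun b => T b a a b)).
Definition normP := Psum (fun a => Psum (fun b => Psum (fun c => Psum (fun d =>
  pmul (T a b c d) (T a b c d))))).
Definition hatP := Psum (fun a => Psum (fun b => Psum (fun c => Psum (fun d =>
  pmul (T a b c d) (Psum (fun u => Psum (fun v => pmul (T a b u v) (T c d u v)))))))).
Definition ringP := Psum (fun a => Psum (fun b => Psum (fun c => Psum (fun d =>
  pmul (T a b c d) (Psum (fun u => Psum (fun v => pmul (T a u c v) (T b u d v)))))))).
Definition checkP i j := Psum (fun u => Psum (fun v =>
  pmul (T i u v j) (Psum (fun a => Psum (fun b => Psum (fun c => pmul (T a b c u) (T a b c v))))))).
Definition hatijP i j := Psum (fun a => Psum (fun b => Psum (fun c =>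
  pmul (T i b a c) (Psum (fun u => Psum (fun v => pmul (T j b u v) (T a c u v))))))).
Definition ringijP i j := Psum (fun a => Psum (fun b => Psum (fun c =>
  pmul (T i a b c) (Psum (fun u => Psum (fun v => pmul (T j u b v) (T a u c v))))))).
Definition RRP i j := Psum (fun a => Psum (fun b => Psum (fun c => pmul (T i a b c) (T j a b c)))).
Definition GP (sc ns rr rh : PolZ) (i j : nat) : PolZ :=
  GPgen sc ns rr rh (checkP i j) (hatijP i j) (ringijP i j) (RRP i j) (if i == j then Zpos xH else Z0).
End Sym.

Definition checkb (tab : seq (seq (seq (seq PolZ)))) : bool :=
  let T := lk tab in
  let sc := scalP T in let ns := normP T in let rr := ringP T in let rh := hatP T in
  all (fun i => all (fun j => peq (GP T sc ns rr rh i j) P0) (iota 0 6)) (iota 0 6).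

Lemma check_ok : checkb mktab = true.
Proof. vm_compute. reflexivity. Qed.

Section Link.
Variables (R : realFieldType) (l : seq R) (Rm : tensor4 R 6) (T : nat -> nat -> nat -> nat -> PolZ).
Hypothesis hT : forall a b c d : 'I_6, ev l (T a b c d) = Rm a b c d.

Ltac sE := rewrite ev_Psum; apply: eq_bigr => ? _.

Lemma scalE : ev l (scalP T) = scal Rm.
Proof. rewrite /scal /ricci; sE; sE; by rewrite hT. Qed.
Lemma normE : ev l (normP T) = normsq Rm.
Proof. rewrite /normsq; sE; sE; sE; sE; by rewrite ev_mul hT. Qed.
Lemma hatE : ev l (hatP T) = Rhat Rm.
Proof.
rewrite /Rhat; sE; sE; sE; sE; rewrite ev_mul hT ev_Psum mulr_sumr; apply: eq_bigr => u _.
by rewrite ev_Psum mulr_sumr; apply: eq_bigr => v _; rewrite ev_mul !hT mulrA.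
Qed.
Lemma ringE : ev l (ringP T) = Rring Rm.
Proof.
rewrite /Rring; sE; sE; sE; sE; rewrite ev_mul hT ev_Psum mulr_sumr; apply: eq_bigr => u _.
by rewrite ev_Psum mulr_sumr; apply: eq_bigr => v _; rewrite ev_mul !hT mulrA.
Qed.
Lemma checkE (i j : 'I_6) : ev l (checkP T i j) = Rcheck_ij Rm i j.
Proof.
rewrite /Rcheck_ij; sE; sE; rewrite ev_mul hT ev_Psum mulr_sumr; apply: eq_bigr => a _.
rewrite ev_Psum mulr_sumr; apply: eq_bigr => b _.
by rewrite ev_Psum mulr_sumr; apply: eq_bigr => c _; rewrite ev_mul !hT mulrA.
Qed.
Lemma hatijE (i j : 'I_6) : ev l (hatijP T i j) = Rhat_ij Rm i j.
Proof.
rewrite /Rhat_ij; sE; sE; sE; rewrite ev_mul hT ev_Psum mulr_sumr; apply: eq_bigr => u _.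
by rewrite ev_Psum mulr_sumr; apply: eq_bigr => v _; rewrite ev_mul !hT mulrA.
Qed.
Lemma ringijE (i j : 'I_6) : ev l (ringijP T i j) = Rring_ij Rm i j.
Proof.
rewrite /Rring_ij; sE; sE; sE; rewrite ev_mul hT ev_Psum mulr_sumr; apply: eq_bigr => u _.
by rewrite ev_Psum mulr_sumr; apply: eq_bigr => v _; rewrite ev_mul !hT mulrA.
Qed.
Lemma RRE (i j : 'I_6) : ev l (RRP T i j) = RR_ij Rm i j.
Proof. rewrite /RR_ij; sE; sE; sE; by rewrite ev_mul !hT. Qed.
End Link.

Lemma zRg (R : realFieldType) (i j : 'I_6) :
  zR R (if (i : nat) == j then Zpos xH else Z0) = gmet i j.
Proof. rewrite /gmet (_ : (i == j) = ((i:nat) == j)) //; case: (_ == _); by rewrite /zR. Qed.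

Lemma mem_iota_ord (i : 'I_6) : (i : nat) \in iota 0 6.
Proof. by rewrite mem_iota ltn_ord. Qed.


Lemma evGPgen (R : realFieldType) (l : seq R) sc ns rr rh ch hi ri rrp g :
  ev l (GPgen sc ns rr rh ch hi ri rrp g) =
  (- ev l sc * ev l ns + 4 * ev l rr - 2 * ev l rh) * zR R g
  + 12 * ev l ch + 12 * ev l hi - 24 * ev l ri + 4 * ev l sc * ev l rrp.
Proof.
rewrite /GPgen !(ev_add, ev_mul, ev_C).
rewrite /zR (_ : int_of_Z (Zpos 4) = 4%:Z) // (_ : int_of_Z (Zpos 12) = 12%:Z) //.
rewrite (_ : int_of_Z (Zneg 2) = - 2%:Z) // (_ : int_of_Z (Zneg 24) = - 24%:Z) //.
rewrite (_ : int_of_Z (Zneg 1) = - 1%:Z) //.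
rewrite !rmorphN /=.
ring.
Qed.

Unset Implicit Arguments.

Theorem corollary3p3 (R : realFieldType) (Rm : tensor4 R 6) :
  curvature_tensor Rm -> einstein Rm ->
  forall i j : 'I_6,
    (- scal Rm * normsq Rm + 4 * Rring Rm - 2 * Rhat Rm) * gmet i j
    + 12 * Rcheck_ij Rm i j + 12 * Rhat_ij Rm i j - 24 * Rring_ij Rm i j
    + 4 * scal Rm * RR_ij Rm i j = 0.
Proof.
move=> hc he i j.
have hT := TE hc he.
have := check_ok; rewrite /checkb => /allP /(_ i (mem_iota_ord i)) /allP /(_ j (mem_iota_ord j)) hp.
pose T := lk mktab.
have hp' : peq (GP T (scalP T) (normP T) (ringP T) (hatP T) i j) P0 := hp.
have := @ev_eq0 R (env Rm) _ hp'.
rewrite /GP evGPgen.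
rewrite zRg (scalE hT) (normE hT) (ringE hT) (hatE hT)
  (checkE hT) (hatijE hT) (ringijE hT) (RRE hT).
move=> <-; ring.
Qed.
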